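(* Let $X$ be a real Banach space and let $x, y \in X$ be non-zero. Then the following are equivalent: (i) there exist $\lambda > 0$ and $r > 0$ such that the open ball $B(\lambda x, r) = \{ z \in X : \|\lambda x - z\| < r\}$ contains $y$ but does not contain the zero vector; (ii) $\rho'_{-}(x, y) > 0$.
   Context: For $x, y$ in a real normed space $X$, the norm derivatives are $\rho'_{+}(x,y) = \lim_{t \to 0^+} \|x\| \frac{\|x+ty\| - \|x\|}{t}$ and $\rho'_{-}(x,y) = \lim_{t \to 0^-} \|x\| \frac{\|x+ty\| - \|x\|}{t}$. Balls are open balls. *)

(* Defs.v *)
From HB Require Import structures.
From mathcomp Require Import all_boot all_order all_algebra.
From mathcomp Require Import all_classical all_reals all_analysis.
Set Implicit Arguments. Unset Strict Implicit. Unset Printing Implicit Defensive.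
Import Order.TTheory GRing.Theory Num.Theory.
Import numFieldNormedType.Exports.
Local Open Scope classical_set_scope.
Local Open Scope ring_scope.

(* Left norm derivative:
   rho'_-(x,y) = lim_{t -> 0^-} ||x|| (||x + t y|| - ||x||) / t.
   (The limit always exists in a real normed space by convexity of the norm.) *)
Definition norm_deriv_minus (R : realType) (X : normedModType R) (x y : X) : R :=
  lim ((fun t : R => `|x| * ((`|x + t *: y| - `|x|) / t)) @ 0^'-).

(* Main.v *)
Require Import Defs.
From HB Require Import structures.
From mathcomp Require Import all_boot all_order all_algebra.
From mathcomp Require Import all_classical all_reals all_analysis.
From mathcomp Require Import lra.
Import Order.TTheory GRing.Theory Num.Theory.
Import numFieldNormedType.Exports.
Local Open Scope classical_set_scope.
Local Open Scope ring_scope.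

Section Aux.
Variables (R : realType) (X : normedModType R) (x y : X).

Let q (t : R) := (`|x + t *: y| - `|x|) / t.

Lemma q_mono s u : s < u -> u < 0 -> q s <= q u.
Proof.
move=> su u0.
have s0 : s < 0 by apply: lt_trans su u0.
set th := u / s.
have th0 : 0 < th by rewrite /th nmulr_rgt0 // invr_lt0.
have th1 : th < 1 by rewrite /th ltr_ndivrMr // mul1r.
have E : x + u *: y = th *: (x + s *: y) + (1 - th) *: x.
  rewrite scalerDr scalerA /th mulrAC -mulrA (mulfV (ltr0_neq0 s0)) mulr1.
  by rewrite scalerBl scale1r [RHS]addrC addrA subrK.
have H : `|x + u *: y| <= th * `|x + s *: y| + (1 - th) * `|x|.
  rewrite E; apply: (le_trans (ler_normD _ _)).
  have th1' : 0 <= 1 - th by rewrite subr_ge0 ltW.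
  by rewrite (normrZ th) (normrZ (1 - th)) (ger0_norm (ltW th0)) (ger0_norm th1').
rewrite /q.
set A := `|x + s *: y| - `|x|; set B := `|x + u *: y| - `|x|.
have HB : B <= th * A by rewrite /B /A; lra.
have thA : th * A = u * (A / s).
  by rewrite /th mulrAC -mulrA [A * _]mulrC mulrA.
have Bu : B = u * (B / u) by rewrite mulrC mulfVK // ltr0_neq0.
set a := A / s; set b := B / u.
rewrite -/a -/b in thA Bu *.
nra.
Qed.

Lemma q_ub t : t < 0 -> q t <= `|y|.
Proof.
move=> t0; rewrite /q ler_ndivrMr //.
have := ler_normD x (t *: y); rewrite normrZ ltr0_norm //.
have := ler_normD (x + t *: y) (- (t *: y)); rewrite addrK normrN normrZ ltr0_norm //.
nra.
Qed.

End Aux.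

Section Main.
Variables (R : realType) (X : normedModType R) (x y : X).
Let g (t : R) := `|x| * ((`|x + t *: y| - `|x|) / t).

Lemma g_mono s u : s <= u -> u < 0 -> g s <= g u.
Proof.
rewrite le_eqVlt => /orP[/eqP -> //|su u0].
by rewrite /g ler_wpM2l // (@q_mono R X x y s u su u0).
Qed.

Lemma g_cvg : cvg (g t @[t --> 0^'-]).
Proof.
apply: nondecreasing_at_left_is_cvgr.
  apply: nearW => z a b; rewrite !in_itv/= => /andP[_ a0] /andP[_ b0] ab.
  exact: g_mono.
apply: nearW => z; exists (`|x| * `|y|) => _ [t tz <-]. move: tz. rewrite /= in_itv/= => /andP[_ t0].
by rewrite /g ler_wpM2l // (@q_ub R X x y t t0).
Qed.

Lemma g_le_lim s : s < 0 -> g s <= lim (g t @[t --> 0^'-]).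
Proof.
move=> s0; apply: limr_ge; first exact: g_cvg.
near=> t; apply: g_mono; last by near: t; exact: nbhs_left_lt.
by apply: ltW; near: t; exact: nbhs_left_gt.
Unshelve. all: by end_near. Qed.

Lemma lim_pos_ex : 0 < lim (g t @[t --> 0^'-]) -> exists s, s < 0 /\ 0 < g s.
Proof.
move=> l0.
have := cvgr_gt _ g_cvg _ l0 => H.
have [s [s0 gs]] : exists s, s < 0 /\ 0 < g s.
  apply: (@filter_ex R (0^'-) _).
  by near=> t; split; [near: t; exact: nbhs_left_lt|near: t; exact: H].
by exists s.
Unshelve. all: by end_near. Qed.
End Main.

Theorem mainTheorem1 (R : realType) (X : completeNormedModType R) (x y : X) :
  x != 0 -> y != 0 ->
  ((exists (lambda r : R), 0 < lambda /\ 0 < r /\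
      `|lambda *: x - y| < r /\ ~ (`|lambda *: x - 0| < r))
   <-> 0 < norm_deriv_minus x y).
Proof.
move=> x0 y0; rewrite /norm_deriv_minus; split.
- move=> [l [r [l0 [r0 [h1 h2]]]]].
  have h2' : r <= `|l *: x| by rewrite subr0 in h2; rewrite leNgt; apply/negP.
  set s := - l^-1.
  have s0 : s < 0 by rewrite /s oppr_lt0 invr_gt0.
  have E : x + s *: y = l^-1 *: (l *: x - y).
    by rewrite scalerBr scalerA mulVf ?gt_eqF // scale1r /s scaleNr.
  have lt : `|x + s *: y| < `|x|.
    rewrite E normrZ gtr0_norm ?invr_gt0 //.
    rewrite ltr_pdivrMl // -[l in l * _]gtr0_norm // -normrZ.
    exact: lt_le_trans h1 h2'.
  apply: lt_le_trans (@g_le_lim R X x y s s0).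
  rewrite mulr_gt0 ?normr_gt0 // nmulr_rgt0 ?invr_lt0 //.
  by rewrite subr_lt0.
- move=> /lim_pos_ex [s [s0 gs]].
  set l := - s^-1.
  have l0 : 0 < l by rewrite /l oppr_gt0 invr_lt0.
  exists l, (`|l *: x|); split => //; split.
    by rewrite normr_gt0 scaler_eq0 negb_or gt_eqF.
  split; last by rewrite subr0 ltxx.
  have E : l *: x - y = l *: (x + s *: y).
    by rewrite scalerDr scalerA /l mulNr mulVf ?lt_eqF // scaleN1r.
  rewrite E !normrZ ltr_pM2l ?normr_gt0 ?gt_eqF //.
  move: gs; rewrite pmulr_rgt0 ?normr_gt0 // nmulr_lgt0 ?invr_lt0 //.
  by rewrite subr_lt0.
Qed.
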